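(* Let $N>0$ be an integer. Then, as formal power series in $X,Y,Z$, \[ \Phi_0^{(N)}\left(X,Y,Z;\frac{N}{N-Y}\right) =\sum_{k,q,h>0}X^{k-q-h}Y^{q-h}Z^{h-1}\sum_{({\boldsymbol{k}};l)\in \tilde{I}_0(k,q,h)}\tilde{\zeta}^{(N)}({\boldsymbol{k}};l). \]
   Context: $(x)_m=x(x+1)\cdots(x+m-1)$ is the rising factorial, $(x)_0=1$. For ${\boldsymbol{k}}=(k_1,\ldots,k_r)\in\mathbb{Z}_{>0}^r$, $\mathrm{Li}_{\boldsymbol{k}}^{(N)}(z)=\sum_{0<m_1<\cdots<m_r<N}\frac{1}{m_1^{k_1}\cdots m_r^{k_r}}\frac{(N-m_r)_{m_r}}{(Nz^{-1}-m_r)_{m_r}}$. For integers $k,r,h>0$ let $I_0(k,r,h)$ be the set of $(k_1,\ldots,k_r)\in\mathbb{Z}_{>0}^r$ with $k_r>1$, $k_1+\cdots+k_r=k$, $\#\{i\mid k_i>1\}=h$; $G_0^{(N)}(k,r,h;z)=\sum_{{\boldsymbol{k}}\in I_0(k,r,h)}\mathrm{Li}^{(N)}_{\boldsymbol{k}}(z)$ and $\Phi_0^{(N)}(X,Y,Z;z)=\sum_{k,r,h>0}G^{(N)}_0(k,r,h;z)X^{k-r-h}Y^{r-h}Z^{h-1}$; with $z=N/(N-Y)$ the factor $1/(N-Y-m)_m$ is expanded as a power series in $Y$. For $(k_1,\ldots,k_r)\in\mathbb{Z}_{>0}^r$ and integer $l\ge0$, \[ \tilde{\zeta}^{(N)}(k_1,\ldots,k_r;l)=\sum_{0<m_1<\cdots<m_r<N}\frac{1}{m_1^{k_1}\cdots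 m_r^{k_r}}\sum_{0<n_1\le\cdots\le n_l\le m_r}\frac{1}{(N-n_1)\cdots(N-n_l)} \] (the inner sum is $1$ when $l=0$), and $\tilde{I}_0(k,q,h)$ is the set of $(k_1,\ldots,k_r;l)\in\mathbb{Z}_{>0}^r\times\mathbb{Z}_{\ge0}$ with $r>0$, $k_r>1$, $k_1+\cdots+k_r+l=k$, $r+l=q$, $\#\{i\mid k_i>1\}=h$. *)

(* Defs.v *)
From HB Require Import structures.
From mathcomp Require Import all_boot all_order all_algebra.
Set Implicit Arguments. Unset Strict Implicit. Unset Printing Implicit Defensive.
Import Order.TTheory GRing.Theory Num.Theory.
Local Open Scope ring_scope.

(* A power series is its coefficient sequence: f n = [Y^n] f. *)
Definition fps := nat -> rat.

Definition fps_of_poly (p : {poly rat}) : fps := fun n => p`_n.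

Definition fps_mul (f g : fps) : fps :=
  fun n => \sum_(i < n.+1) f i * g (n - i)%N.

Fixpoint fps_inv_seq (f : fps) (n : nat) : seq rat :=
  match n with
  | 0 => [:: (f 0%N)^-1]
  | n'.+1 => let s := fps_inv_seq f n' in
      rcons s (- (f 0%N)^-1 * \sum_(i < n'.+1) f i.+1 * nth 0 s (n' - i)%N)
  end.

Definition fps_inv (f : fps) : fps := fun n => nth 0 (fps_inv_seq f n) n.

Definition rising {R : nzRingType} (x : R) (m : nat) : R :=
  \prod_(j < m) (x + j%:R).

Definition hweight (ks ms : seq nat) : rat :=
  \prod_(i < size ks) ((nth 0%N ms i)%:R ^+ nth 0%N ks i)^-1.

(* Li^{(N)}_{ks}(z) at z = N/(N-Y), i.e. N z^{-1} = N - Y, as a power series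
   in Y: the factor 1/(N - Y - m_r)_{m_r} is the power-series inverse of the
   polynomial (N - Y - m_r)_{m_r}. *)
Definition LiY (N : nat) (ks : seq nat) : fps := fun j =>
  \sum_(t : (size ks).-tuple 'I_N | path ltn 0%N (map val t))
    let ms := map val t in
    let mr := last 0%N ms in
    hweight ks ms * rising ((N - mr)%N%:R : rat) mr *
    fps_inv (fps_of_poly (rising (N%:R%:P - 'X - mr%:R%:P : {poly rat}) mr)) j.

Definition in_I0 (k r h : nat) (ks : seq nat) : bool :=
  [&& size ks == r, all (fun x => 0 < x)%N ks, (1 < last 0%N ks)%N,
      sumn ks == k & count (fun x => 1 < x)%N ks == h].

(* G_0^{(N)}(k,r,h; N/(N-Y)) as a power series in Y.  Every element of
   I_0(k,r,h) has entries <= k, so it is enumerated by r-tuples over 'I_k.+1. *)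
Definition G0Y (N k r h : nat) : fps := fun j =>
  \sum_(t : r.-tuple 'I_k.+1 | in_I0 k r h (map val t)) LiY N (map val t) j.

(* Three-variable formal power series: coefficient of X^a Y^b Z^c. *)
Definition fps3 := nat -> nat -> nat -> rat.

(* Phi_0^{(N)}(X,Y,Z; N/(N-Y)) = sum_{k,r,h>0} G_0(k,r,h;N/(N-Y)) X^{k-r-h} Y^{r-h} Z^{h-1}.
   Coefficient of X^a Y^b Z^c: h = c+1, r = h + d (d = r - h <= b),
   k = a + r + h, and the remaining Y^{b-d} is taken from G_0.
   (Terms with k < r + h or r < h vanish since I_0(k,r,h) is empty.) *)
Definition Phi0Y (N : nat) : fps3 := fun a b c =>
  \sum_(d < b.+1) G0Y N (a + (c.+1 + d) + c.+1)%N (c.+1 + d)%N c.+1 (b - d)%N.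

Definition zetat (N : nat) (ks : seq nat) (l : nat) : rat :=
  \sum_(t : (size ks).-tuple 'I_N | path ltn 0%N (map val t))
    let ms := map val t in
    hweight ks ms *
    \sum_(u : l.-tuple 'I_N |
            path leq 1%N (map val u) && all (fun n => n <= last 0%N ms)%N (map val u))
      \prod_(i < l) ((N - nth 0%N (map val u) i)%N%:R)^-1.

Definition in_tI0 (k q h : nat) (ks : seq nat) (l : nat) : bool :=
  [&& (0 < size ks)%N, all (fun x => 0 < x)%N ks, (1 < last 0%N ks)%N,
      sumn ks + l == k, size ks + l == q & count (fun x => 1 < x)%N ks == h].

(* sum_{(ks;l) in tilde I_0(k,q,h)} tilde zeta(ks; l): r = size ks ranges over
   1..q, l = q - r, entries of ks are <= k. *)
Definition tZ0 (N k q h : nat) : rat :=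
  \sum_(r < q.+1)
    \sum_(t : r.-tuple 'I_k.+1 | in_tI0 k q h (map val t) (q - r)%N)
      zetat N (map val t) (q - r)%N.

(* Right-hand side series sum_{k,q,h>0} X^{k-q-h} Y^{q-h} Z^{h-1} tZ0(k,q,h):
   coefficient of X^a Y^b Z^c has h = c+1, q = b + h, k = a + q + h.
   (Terms with k < q + h or q < h vanish since tilde I_0 is then empty.) *)
Definition RHS0 (N : nat) : fps3 := fun a b c =>
  tZ0 N (a + (b + c.+1) + c.+1)%N (b + c.+1)%N c.+1.

(* Main.v *)
Require Import Defs.
From HB Require Import structures.
From mathcomp Require Import all_boot all_order all_algebra.
From mathcomp Require Import ring lra zify.
Set Implicit Arguments. Unset Strict Implicit. Unset Printing Implicit Defensive.
Import Order.TTheory GRing.Theory Num.Theory.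
Local Open Scope ring_scope.

Lemma fps_inv_seq_size f n : size (fps_inv_seq f n) = n.+1.
Proof. by elim: n => [|n IH] //=; rewrite size_rcons IH. Qed.

Lemma fps_inv_seq_nth f n k : (k <= n)%N -> nth 0 (fps_inv_seq f n) k = fps_inv f k.
Proof.
elim: n => [|n IH]; first by rewrite leqn0 => /eqP ->.
rewrite leq_eqVlt => /orP [/eqP -> //| hk].
by rewrite /= nth_rcons fps_inv_seq_size hk IH.
Qed.

Lemma fps_inv0 f : fps_inv f 0 = (f 0%N)^-1.
Proof. by []. Qed.

Lemma fps_invS f n : fps_inv f n.+1 =
  - (f 0%N)^-1 * \sum_(i < n.+1) f i.+1 * fps_inv f (n - i)%N.
Proof.
rewrite /fps_inv /= nth_rcons fps_inv_seq_size ltnn eqxx.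
congr (_ * _); apply: eq_bigr => i _.
by rewrite fps_inv_seq_nth // leq_subr.
Qed.

Lemma fps_inv_unique f g : f 0%N != 0 ->
  (forall n, fps_mul f g n = (n == 0%N)%:R) -> forall n, fps_inv f n = g n.
Proof.
move=> f0 H n; elim: n {-2}n (leqnn n) => [|n IH] k.
  rewrite leqn0 => /eqP ->; have := H 0%N.
  rewrite /fps_mul big_ord_recl big_ord0 addr0 subnn /= => e.
  by rewrite fps_inv0 -[g 0%N](mulKf f0) e mulr1.
rewrite leq_eqVlt => /orP [/eqP ->|]; last by apply: IH.
have := H n.+1; rewrite /fps_mul big_ord_recl /= subn0 => e.
rewrite fps_invS.
have -> : \sum_(i < n.+1) f i.+1 * fps_inv f (n - i)%N =
          \sum_(i < n.+1) f (bump 0 i) * g (n.+1 - bump 0 i)%N.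
  apply: eq_bigr => i _; rewrite /bump /= add1n subSS IH //.
  by rewrite leq_subr.
move/eqP: e; rewrite addrC addr_eq0 => /eqP ->.
by rewrite mulrN mulNr opprK mulKf.
Qed.
Definition cc (N x : nat) : rat := ((N - x)%N%:R)^-1.

Fixpoint DD (N j m : nat) : rat :=
  match j with
  | 0 => 1
  | j'.+1 => \sum_(x < N | (1 <= x <= m)%N) cc N x * DD N j' x
  end.

Definition QQ (N m : nat) : {poly rat} := rising (N%:R%:P - 'X - m%:R%:P) m.
Definition AA (N m : nat) : rat := rising ((N - m)%N%:R) m.

Lemma DD_S0 N j : DD N j.+1 0 = 0.
Proof. by rewrite /= big_pred0 // => x; rewrite leqn0 andbC; case: (x : nat). Qed.

Lemma DD_rec N j m : (m.+1 < N)%N ->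
  DD N j.+1 m.+1 = DD N j.+1 m + cc N m.+1 * DD N j m.+1.
Proof.
move=> hm /=; rewrite (bigD1 (Ordinal hm)) //= addrC; congr (_ + _).
apply: eq_bigl => x; rewrite -val_eqE /=.
by apply/idP/idP; lia.
Qed.

Lemma AA_S N m : (m.+1 <= N)%N -> AA N m.+1 = (N - m.+1)%N%:R * AA N m.
Proof.
move=> hm; rewrite /AA /rising big_ord_recl /= addr0; congr (_ * _).
apply: eq_bigr => i _; rewrite /bump /= add1n.
by rewrite -!natrD; congr (_%:R); lia.
Qed.

Lemma QQ_S N m : (m.+1 <= N)%N ->
  QQ N m.+1 = ((N - m.+1)%N%:R%:P - 'X) * QQ N m.
Proof.
move=> hm; rewrite /QQ /rising big_ord_recl /= addr0; congr (_ * _).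
  by rewrite natrB // polyCB; ring.
apply: eq_bigr => i _; rewrite /bump /= add1n !polyC_natr -(natr1 m) -(natr1 i); ring.
Qed.

Lemma AA_neq0 N m : (m < N)%N -> AA N m != 0.
Proof.
move=> hm; rewrite /AA /rising; apply/prodf_neq0 => i _.
by rewrite -natrD pnatr_eq0; lia.
Qed.

Lemma DD_rec' N k m : (m.+1 < N)%N ->
  (N - m.+1)%N%:R * DD N k m.+1 =
  (N - m.+1)%N%:R * DD N k m + (if k is k'.+1 then DD N k' m.+1 else 0).
Proof.
move=> hm; case: k => [|k]; first by rewrite addr0.
rewrite DD_rec // mulrDr mulrA /cc mulfV ?mul1r //.
by rewrite pnatr_eq0; lia.
Qed.

Lemma QD N m : (m < N)%N -> forall n,
  fps_mul (fps_of_poly (QQ N m)) (fun j => DD N j m) n =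
  (if n == 0%N then AA N m else 0).
Proof.
elim: m => [|m IH] hm n.
  rewrite /fps_mul /fps_of_poly /QQ /AA /rising !big_ord0.
  case: n => [|n]; first by rewrite big_ord1 coefC /= mulr1.
  rewrite big_ord_recl DD_S0 mulr0 add0r big1 // => i _.
  by rewrite coefC /= mul0r.
have hm' : (m < N)%N by lia.
rewrite /fps_mul /fps_of_poly QQ_S // AA_S //.
set al := (N - m.+1)%N%:R.
set Q := QQ N m.
under eq_bigr => i _ do rewrite mulrBl coefB coefCM coefXM mulrBl.
rewrite sumrB.
under eq_bigr => i _ do rewrite -mulrA (mulrC al) -mulrA (mulrC _ al) DD_rec' // mulrDr mulrA (mulrC _ al) -mulrA.
rewrite big_split /= -mulr_sumr.
have := IH hm' n; rewrite /fps_mul /fps_of_poly => ->.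
rewrite big_ord_recr big_ord_recl /= subnn mulr0 addr0 mul0r add0r.
have -> : \sum_(i < n) Q`_i * (match (n - i)%N with 0%N => 0 | k'.+1 => DD N k' m.+1 end)
  = \sum_(i < n) Q`_(0 + i) * DD N (n - bump 0 i) m.+1.
  apply: eq_bigr => i _; rewrite add0n /bump /= add1n.
  have hi := ltn_ord i.
  by have -> : (n - i = (n - i.+1).+1)%N by lia.
rewrite -addrA subrr addr0.
by case: (n == 0%N); rewrite ?mulr0.
Qed.

Lemma key_series N m j : (m < N)%N ->
  AA N m * fps_inv (fps_of_poly (QQ N m)) j = DD N j m.
Proof.
move=> hm; have a0 := AA_neq0 hm.
have q0 : fps_of_poly (QQ N m) 0%N = AA N m.
  have := QD hm 0; rewrite /fps_mul big_ord1 /= mulr1 => <-; by [].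
rewrite (@fps_inv_unique _ (fun j => (AA N m)^-1 * DD N j m)).
- by rewrite mulrA mulfV // mul1r.
- by rewrite q0.
move=> n; have := QD hm n; rewrite /fps_mul => e.
under eq_bigr => i _ do rewrite mulrCA.
rewrite -mulr_sumr e; case: (n == 0%N); first by rewrite mulVf.
by rewrite mulr0.
Qed.
Lemma sum_tuple_cons (T : finType) j (P : pred (seq T)) (F : seq T -> rat) :
  \sum_(u : j.+1.-tuple T | P u) F u =
  \sum_(x : T) \sum_(t : j.-tuple T | P (x :: t)) F (x :: t).
Proof.
rewrite pair_big_dep /=.
rewrite (reindex (fun p : T * j.-tuple T => cons_tuple p.1 p.2)) /=; last first.
  exists (fun u : j.+1.-tuple T => (thead u, behead_tuple u)).
    by move=> [x t] _ /=; congr (_, _); apply: val_inj.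
  by move=> u _; apply: val_inj => /=; rewrite [in RHS](tuple_eta u).
by [].
Qed.

Definition geq' := fun a b : nat => (b <= a)%N.
Lemma geq'_trans : transitive geq'.
Proof. rewrite /geq' => a b c; lia. Qed.

Definition EE N m j :=
  \sum_(u : j.-tuple 'I_N | path geq' m (map val u) && all (fun x => 0 < x)%N (map val u))
     \prod_(x <- map val u) cc N x.

Lemma EE_DD N j m : EE N m j = DD N j m.
Proof.
elim: j m => [|j IH] m.
  rewrite /EE (big_pred1 [tuple]) ?big_nil //.
  by move=> u; rewrite tuple0 /=; apply/esym/eqP.
rewrite /EE (sum_tuple_cons _ (fun s => path geq' m (map val s) && all (fun x => 0 < x)%N (map val s)) (fun s => \prod_(x <- map val s) cc N x)) /=.
rewrite (bigID (fun x : 'I_N => (1 <= x <= m)%N)) /= [X in _ + X]big1 ?addr0.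
  apply: eq_bigr => x hx.
  rewrite -IH /EE mulr_sumr; apply: eq_big => t.
    by move: hx; rewrite /geq' /=; case/andP => -> ->.
  by move=> _; rewrite big_cons.
move=> x hx; rewrite big_pred0 // => t /=.
by apply/negP => /and3P [/andP [h2 _] h1 _]; move: hx; rewrite /geq' in h2; rewrite h1 h2.
Qed.

Definition HH N m l :=
  \sum_(u : l.-tuple 'I_N |
            path leq 1%N (map val u) && all (fun n => n <= m)%N (map val u))
      \prod_(i < l) ((N - nth 0%N (map val u) i)%N%:R : rat)^-1.

Lemma prod_nth N j (s : seq nat) : size s = j ->
  \prod_(i < j) ((N - nth 0%N s i)%N%:R)^-1 = \prod_(x <- s) cc N x.
Proof. by move=> <-; rewrite (big_nth 0%N) big_mkord. Qed.

Lemma rev_tuple_inj j (T : Type) : injective (@rev_tuple j T).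
Proof.
move=> u v e; apply: val_inj; rewrite -[val u]revK -[val v]revK.
by have := congr1 val e => /= ->.
Qed.

Lemma HH_EE N m j : HH N m j = EE N m j.
Proof.
rewrite /HH (reindex_inj (@rev_tuple_inj j 'I_N)) /EE.
apply: eq_big => u /=.
  rewrite map_rev (path_sortedE geq'_trans) (path_sortedE leq_trans).
  rewrite !all_rev rev_sorted /geq'.
  by case: (all (leq 1) _); case: (all (fun x => x <= m)%N _); case: (sorted _ _).
move=> _; rewrite (@prod_nth N j) ?size_map ?size_rev ?size_tuple //.
by rewrite map_rev big_rev.
Qed.

Lemma HH_DD N m j : HH N m j = DD N j m.
Proof. by rewrite HH_EE EE_DD. Qed.

Lemma LiY_zetat N ks j : (0 < N)%N -> LiY N ks j = zetat N ks j.
Proof.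
move=> hN; rewrite /LiY /zetat; apply: eq_bigr => t _ /=.
rewrite -mulrA; congr (_ * _).
have hm : (last 0%N (map val t) < N)%N.
  have := mem_last 0%N (map val t); rewrite inE => /orP [/eqP -> //|].
  by case/mapP => x _ ->; apply: ltn_ord.
have := key_series j hm; rewrite /AA /QQ => ->.
by rewrite -HH_DD.
Qed.

Lemma widen_sum r k1 k2 (P : pred (seq nat)) (F : seq nat -> rat) :
  (k1 <= k2)%N -> (forall s, P s -> all (fun x => x <= k1)%N s) ->
  \sum_(t : r.-tuple 'I_k1.+1 | P (map val t)) F (map val t) =
  \sum_(t : r.-tuple 'I_k2.+1 | P (map val t)) F (map val t).
Proof.
move=> hk hP.
have hk' : (k1.+1 <= k2.+1)%N by [].
rewrite [RHS](reindex_onto (fun t : r.-tuple 'I_k1.+1 => map_tuple (widen_ord hk') t)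
   (fun t : r.-tuple 'I_k2.+1 => map_tuple (fun x : 'I_k2.+1 => (inord (val x) : 'I_k1.+1)) t)).
  have e : forall t : r.-tuple 'I_k1.+1,
      map val (map_tuple (widen_ord hk') t) = map val t.
    by move=> t; rewrite /= -map_comp.
  apply: eq_big => t; last by move=> _; rewrite e.
  rewrite e; case: (P _) => //=; apply/esym/eqP/val_inj => /=.
  rewrite -map_comp -[RHS]map_id; apply: eq_map => x /=.
  by apply: val_inj; rewrite /= inordK.
move=> t ht; apply: val_inj => /=; rewrite -map_comp -[RHS]map_id.
have := hP _ ht; rewrite all_map => /allP hall.
apply/eq_in_map => x hx /=; apply: val_inj; rewrite /= inordK //.
rewrite ltnS; exact: hall.
Qed.

Lemma all_le_sumn (s : seq nat) : all (fun x => x <= sumn s)%N s.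
Proof.
elim: s => //= x s IH; rewrite leq_addr /=.
by apply: sub_all IH => y h; apply: leq_trans h (leq_addl _ _).
Qed.

From Stdlib Require Import FunctionalExtensionality.

Theorem proposition5p4 (N : nat) (hN : (0 < N)%N) : Phi0Y N = RHS0 N.
Proof.
apply: functional_extensionality => a.
apply: functional_extensionality => b.
apply: functional_extensionality => c.
rewrite /Phi0Y /RHS0 /tZ0 /G0Y.
pose F := fun r : nat => \sum_(t : r.-tuple 'I_(a + (b + c.+1) + c.+1).+1 | in_tI0 (a + (b + c.+1) + c.+1) (b + c.+1) c.+1
                 [seq \val i | i <- t] (b + c.+1 - r)) zetat N [seq \val i | i <- t] (b + c.+1 - r).
have -> : \sum_(r < (b + c.+1).+1)
     \sum_(t : r.-tuple 'I_(a + (b + c.+1) + c.+1).+1 | in_tI0 (a + (b + c.+1) + c.+1) (b + c.+1) c.+1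
                 [seq \val i | i <- t] (b + c.+1 - r))
        zetat N [seq \val i | i <- t] (b + c.+1 - r)%N = \sum_(r < (b + c.+1).+1) F r by [].
rewrite -(big_mkord (fun _ => true) F) (big_cat_nat _ (n := c.+1)) //=; last by lia.
rewrite [X in X + _]big1_seq ?add0r; last first.
  move=> r; rewrite mem_index_iota => /andP [_ hr].
  rewrite /F big_pred0 // => t; apply/negP => /and5P [_ _ _ _ /andP [_ /eqP hc]].
  have := count_size (fun x => 1 < x)%N (map val t).
  by rewrite hc size_map size_tuple; lia.
have -> : \sum_(c.+1 <= i < (b + c.+1).+1) F i = \sum_(i < b.+1) F (i + c.+1)%N.
  rewrite -{1}[c.+1]add0n big_addn.
  have -> : ((b + c.+1).+1 - c.+1)%N = b.+1 by lia.
  by rewrite big_mkord.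
apply: eq_bigr => d _; rewrite /F.
rewrite [(d + c.+1)%N]addnC.
have hd := ltn_ord d.
have -> : (b + c.+1 - (c.+1 + d))%N = (b - d)%N by lia.
under eq_bigr => t _ do rewrite LiY_zetat //.
rewrite (@widen_sum (c.+1 + d) (a + (c.+1 + d) + c.+1) (a + (b + c.+1) + c.+1)
   (in_I0 (a + (c.+1 + d) + c.+1) (c.+1 + d) c.+1) (fun s => zetat N s (b - d))); first last.
- move=> s /and5P [_ _ _ /eqP <- _]; exact: all_le_sumn.
- lia.
apply: eq_bigl => t.
have hs : size (map val t) = (c.+1 + d)%N by rewrite size_map size_tuple.
rewrite /in_I0 /in_tI0 hs eqxx.
have -> : (0 < c.+1 + d)%N = true by lia.
have -> : (c.+1 + d + (b - d) == b + c.+1)%N = true by apply/eqP; lia.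
have -> : (sumn (map val t) + (b - d) == a + (b + c.+1) + c.+1)%N =
          (sumn (map val t) == a + (c.+1 + d) + c.+1)%N by apply/eqP/eqP; lia.
by [].
Qed.
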